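(* $VMO^w$ is a closed subspace of $BMO^w$ (with respect to the norm $\|f\|_{BMO^w}=\|mf\|_\infty+\|Mf\|_\infty$).
   Context: On $\mathbb{R}^n$ with Lebesgue measure $\lambda$ and cubes $Q$ (hypercubes): for $f\in L^1_{\mathrm{loc}}$, $f_Q=\left|\frac{1}{\lambda(Q)}\int_Q f\,d\lambda\right|$, $Mf(x)=\sup_{Q\ni x}\left|\frac{1}{\lambda(Q)}\int_Q[f(\xi)-f_Q]\,d\lambda(\xi)\right|$, $mf(x)=\sup_{Q\ni x}f_Q$ (suprema over cubes containing $x$). $BMO^w=\{f\in L^1_{\mathrm{loc}}: Mf\in L^\infty\}$. $VMO^w$ is the set of $f\in L^1_{\mathrm{loc}}$ with $\lim_{\lambda(Q)\to0}\left|\frac{1}{\lambda(Q)}\int_Q[f(\xi)-f_Q]\,d\lambda(\xi)\right|=0$. *)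

(* Defs.v *)
From HB Require Import structures.
From mathcomp Require Import all_boot all_order all_algebra.
From mathcomp Require Import all_classical all_reals all_analysis.
Set Implicit Arguments.
Unset Strict Implicit.
Unset Printing Implicit Defensive.
Import Order.TTheory GRing.Theory Num.Theory.
Import numFieldNormedType.Exports.
Local Open Scope classical_set_scope.
Local Open Scope ring_scope.

Fixpoint lebn (R : realType) (n : nat) : set (n.-tuple R) -> \bar R :=
  match n as n0 return set (n0.-tuple R) -> \bar R with
  | 0 => fun A => (\1_A (nil_tuple R))%:E
  | n'.+1 => fun A =>
      (\int[@lebesgue_measure R]_x
          @lebn R n' (fun t : n'.-tuple R => A (cons_tuple x t)))%E
  end.

Definition cube (R : realType) (n : nat) (a : n.-tuple R) (s : R)
  : set (n.-tuple R) :=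
  [set x | forall i : 'I_n, tnth a i <= tnth x i <= tnth a i + s].

Definition is_cube (R : realType) (n : nat) (Q : set (n.-tuple R)) : Prop :=
  exists (a : n.-tuple R) (s : R), 0 < s /\ Q = cube a s.

Definition vol (R : realType) (n : nat) (Q : set (n.-tuple R)) : R :=
  fine (@lebn R n Q).

Definition intQ (R : realType) (n : nat) (Q : set (n.-tuple R))
  (f : n.-tuple R -> R) : R :=
  fine (\int[@lebn R n]_(x in Q) (f x)%:E)%E.

Definition fQ (R : realType) (n : nat) (f : n.-tuple R -> R)
  (Q : set (n.-tuple R)) : R :=
  `| intQ Q f / vol Q |.

Definition osc (R : realType) (n : nat) (f : n.-tuple R -> R)
  (Q : set (n.-tuple R)) : R :=
  `| intQ Q (fun xi => f xi - fQ f Q) / vol Q |.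

Definition Mw (R : realType) (n : nat) (f : n.-tuple R -> R)
  (x : n.-tuple R) : \bar R :=
  ereal_sup [set (osc f Q)%:E | Q in [set Q | is_cube Q /\ Q x]].

Definition mw (R : realType) (n : nat) (f : n.-tuple R -> R)
  (x : n.-tuple R) : \bar R :=
  ereal_sup [set (fQ f Q)%:E | Q in [set Q | is_cube Q /\ Q x]].

Definition Linf_norm (R : realType) (n : nat) (g : n.-tuple R -> \bar R)
  : \bar R :=
  ereal_inf [set y : \bar R |
    almost_everywhere (@lebn R n) (fun x => (`|g x| <= y)%E)].

(* f in L^1_loc(R^n): measurable and integrable on every cube
   (equivalently on every compact set) *)
Definition L1loc (R : realType) (n : nat) (f : n.-tuple R -> R) : Prop :=
  measurable_fun [set: n.-tuple R] f /\
  forall Q : set (n.-tuple R), is_cube Q ->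
    (\int[@lebn R n]_(x in Q) `|(f x)%:E| < +oo)%E.

Definition BMOw (R : realType) (n : nat) (f : n.-tuple R -> R) : Prop :=
  L1loc f /\ (Linf_norm (Mw f) < +oo)%E.

Definition VMOw (R : realType) (n : nat) (f : n.-tuple R -> R) : Prop :=
  L1loc f /\
  forall eps : R, 0 < eps -> exists delta : R, 0 < delta /\
    forall Q : set (n.-tuple R), is_cube Q -> vol Q < delta -> osc f Q < eps.

Definition BMOw_norm (R : realType) (n : nat) (f : n.-tuple R -> R) : \bar R :=
  (Linf_norm (mw f) + Linf_norm (Mw f))%E.

(* Main.v *)
Require Import Defs.
From HB Require Import structures.
From mathcomp Require Import all_boot all_order all_algebra.
From mathcomp Require Import all_classical all_reals all_analysis.
Import Order.TTheory GRing.Theory Num.Theory.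
Import numFieldNormedType.Exports.
From mathcomp Require Import ring lra zify.
From mathcomp Require Import measurable_realfun.
Local Open Scope classical_set_scope.
Local Open Scope ring_scope.


Section L0.
Context (R : realType).
Definition lm0 : set (0.-tuple R) -> \bar R := @dirac _ _ [tuple] R.
HB.instance Definition _ := Measure.on lm0.
Lemma lm0_sf : sigma_finite setT lm0.
Proof.
exists (fun=> setT); first by rewrite bigcup_const.
by move=> _; split => //; rewrite /lm0 diracT ltry.
Qed.
HB.instance Definition _ := Measure_isSigmaFinite.Build _ _ _ lm0 lm0_sf.
End L0.

Section Step.
Context (R : realType) (n : nat) (mu : {sigma_finite_measure set (n.-tuple R) -> \bar R}).
Definition cpair (p : measurableTypeR R * n.-tuple R) : n.+1.-tuple R := [tuple of p.1 :: p.2].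
Definition uncons (t : n.+1.-tuple R) : measurableTypeR R * n.-tuple R := (thead t : measurableTypeR R, [tuple of behead t]).
Lemma cpairK : cancel cpair uncons.
Proof. by case=> x t; rewrite /uncons /cpair /=; congr pair; apply: val_inj. Qed.
Lemma unconsK : cancel uncons cpair.
Proof. by move=> t; apply: val_inj; rewrite /= [in RHS](tuple_eta t). Qed.
Lemma mcpair : measurable_fun setT cpair.
Proof. apply: measurable_cons => //. Qed.
Lemma muncons : measurable_fun setT uncons.
Proof.
apply/measurable_fun_pairP; split.
  exact: measurable_tnth.
exact: measurable_behead.
Qed.
Definition lstep : set (n.+1.-tuple R) -> \bar R :=
  fun A => ((@lebesgue_measure R) \x mu)%E (cpair @^-1` A).
Let lstep0 : lstep set0 = 0.
Proof. by rewrite /lstep preimage_set0 measure0. Qed.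
Let lstep_ge0 A : (0 <= lstep A)%E.
Proof. by apply: measure_ge0. Qed.
Let lstep_sa : semi_sigma_additive lstep.
Proof.
move=> F mF tF mUF; rewrite /lstep preimage_bigcup.
apply: measure_semi_sigma_additive.
- by move=> k; rewrite -[X in measurable X]setTI; exact: mcpair.
- apply/trivIsetP => /= i j _ _ ij; rewrite -preimage_setI.
  by move/trivIsetP : tF => /(_ _ _ _ _ ij) ->//; rewrite preimage_set0.
- by rewrite -preimage_bigcup -[X in measurable X]setTI; exact: mcpair.
Qed.
HB.instance Definition _ := isMeasure.Build _ _ _ lstep lstep0 lstep_ge0 lstep_sa.
Lemma lstep_sf : sigma_finite setT lstep.
Proof.
have /sigma_finiteP[F [TF ndF Foo]] := sigma_finiteT (@lebesgue_measure R).
have /sigma_finiteP[G [TG ndG Goo]] := sigma_finiteT mu.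
exists (fun k => uncons @^-1` (F k `*` G k)).
  apply/seteqP; split => // t _.
  have : (setT : set (measurableTypeR R * n.-tuple R)) (uncons t) by [].
  rewrite -setXTT TF TG => -[/= [i _ Fi] [j _ Gj]].
  exists (maxn i j) => //; split.
  - by move: Fi; exact/subsetPset/ndF/leq_maxl.
  - by move: Gj; exact/subsetPset/ndG/leq_maxr.
move=> k; have [mF Fk] := Foo k; have [mG Gk] := Goo k; split.
  rewrite -[X in measurable X]setTI; apply: muncons => //.
  exact: measurableX.
rewrite /lstep (_ : cpair @^-1` _ = F k `*` G k); last first.
  by rewrite -comp_preimage (_ : uncons \o cpair = id) //; apply/funext => p; exact: cpairK.
rewrite product_measure1E//.
by rewrite lte_mul_pinfty// ge0_fin_numE.
Qed.
HB.instance Definition _ := Measure_isSigmaFinite.Build _ _ _ lstep lstep_sf.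
End Step.

Fixpoint lebm (R : realType) (n : nat) : {sigma_finite_measure set (n.-tuple R) -> \bar R} :=
  match n as n0 return {sigma_finite_measure set (n0.-tuple R) -> \bar R} with
  | 0 => [the {sigma_finite_measure set _ -> \bar R} of @lm0 R]
  | n'.+1 => [the {sigma_finite_measure set _ -> \bar R} of @lstep R n' (lebm R n')]
  end.

Lemma lebnE (R : realType) (n : nat) : @lebn R n = lebm R n.
Proof.
elim: n => [|n IH]; apply/funext => A //=.
rewrite /lstep /product_measure1 /=; apply: eq_integral => x _ /=.
rewrite IH; congr (lebm R n _); apply/seteqP; split => t; rewrite /xsection /preimage /= inE //.
Qed.

Set Implicit Arguments.
Unset Strict Implicit.

Lemma forall_ordS (n : nat) (P : 'I_n.+1 -> Prop) :
  (forall i, P i) <-> P ord0 /\ (forall j : 'I_n, P (lift ord0 j)).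
Proof.
split; first by move=> H; split.
by move=> [H0 HS] i; case: (unliftP ord0 i) => [j ->|->].
Qed.

Lemma lebmS (R : realType) (n : nat) (A : set (n.+1.-tuple R)) :
  lebm R n.+1 A = ((@lebesgue_measure R) \x (lebm R n))%E (@cpair R n @^-1` A).
Proof. by []. Qed.

Definition face (R : realType) (n : nat) (i : 'I_n) (c : R) : set (n.-tuple R) :=
  [set x | tnth x i = c].

Lemma measurable_face (R : realType) (n : nat) (i : 'I_n) (c : R) :
  measurable (face i c).
Proof.
rewrite /face -[X in measurable X]setTI.
have -> : [set x : n.-tuple R | tnth x i = c] = (fun x => tnth x i) @^-1` [set c] by [].
apply: measurable_tnth => //.
Qed.

Lemma face0 (R : realType) (n : nat) (i : 'I_n) (c : R) : lebm R n (face i c) = 0%E.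
Proof.
elim: n i => [|n IH] i; first by case: i.
rewrite lebmS.
case: (unliftP ord0 i) => [j ->|->].
- change 'I_n in j.
  rewrite (_ : _ @^-1` _ = (setT : set (measurableTypeR R)) `*` face j c); last first.
    by apply/seteqP; split => -[x t]; rewrite /preimage /face /= /cpair (tnthS x t j); tauto.
  by rewrite product_measure1E // ?IH ?mule0 //; exact: measurable_face.
- rewrite (_ : _ @^-1` _ = ([set c] : set (measurableTypeR R)) `*` setT); last first.
    by apply/seteqP; split => -[x t]; rewrite /preimage /face /= /cpair (tnth0 x t); [move=> -> | move=> [-> _]].
  rewrite product_measure1E //.
  have H := @lebesgue_measure_set1 R c.
  by rewrite -[X in (X * _)%E]/(lebesgue_measure ([set c] : set (measurableTypeR R))) H mul0e.
Qed.

Lemma measurable_prodset (R : realType) (n : nat) (P : 'I_n -> set R) :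
  (forall i, measurable (P i)) ->
  measurable [set x : n.-tuple R | forall i, P i (tnth x i)].
Proof.
move=> mP.
rewrite (_ : [set x | _] = \bigcap_(i in setT) ((fun x => tnth x i) @^-1` P i)); last first.
  apply/seteqP; split => x /= H i; first by move=> _; exact: H.
  exact: H.
apply: fin_bigcap_measurable; first exact: finite_finset.
move=> i _.
rewrite -[X in measurable X]setTI; exact: measurable_tnth.
Qed.

Lemma measurable_cube (R : realType) (n : nat) (a : n.-tuple R) (s : R) :
  measurable (cube a s).
Proof.
apply: (@measurable_prodset R n (fun i => `[tnth a i, tnth a i + s]%classic)) => i.
exact: measurable_itv.
Qed.

Lemma vol_cube (R : realType) (n : nat) (a : n.-tuple R) (s : R) : 0 <= s ->
  lebm R n (cube a s) = (s ^+ n)%:E.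
Proof.
move=> s0; elim: n a => [|n IH] a.
  by rewrite /= /lm0 diracE mem_set // => i; case: i.
case/tupleP: a => a0 a.
rewrite lebmS (_ : _ @^-1` _ = `[a0, a0 + s]%classic `*` cube a s); last first.
  apply/seteqP; split => -[x t]; rewrite /preimage /cube /= /cpair forall_ordS /= !tnth0.
    move=> [H0 HS]; split; first by rewrite in_itv.
    by move=> j; have := HS j; rewrite !tnthS.
  move=> [H0 HS]; split; first by rewrite in_itv in H0.
  by move=> j; rewrite !tnthS; exact: HS.
rewrite product_measure1E //; last exact: measurable_cube.
have H := @lebesgue_measure_itv R `[a0, a0 + s].
rewrite -[X in (X * _)%E]/(lebesgue_measure (`[a0, a0 + s]%classic : set (measurableTypeR R))) H IH /=.
case: ltP => hs.
  by rewrite -EFinB -EFinM addrAC subrr add0r exprS.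
rewrite lee_fin in hs; have -> : s = 0 by lra.
by rewrite mul0e expr0n.
Qed.

Section Boxes.
Context (R : realType) (n : nat).

Definition box (a w : 'I_n -> R) : set (n.-tuple R) :=
  [set x | forall i, a i <= tnth x i <= a i + w i].

Definition upd (f : 'I_n -> R) (i : 'I_n) (v : R) : 'I_n -> R :=
  fun j => if j == i then v else f j.

Lemma measurable_box a w : measurable (box a w).
Proof.
apply: (@measurable_prodset R n (fun i => `[a i, a i + w i]%classic)) => i.
exact: measurable_itv.
Qed.

Lemma box_splitU a w i u : 0 <= u <= w i ->
  box a w = box a (upd w i u) `|` box (upd a i (a i + u)) (upd w i (w i - u)).
Proof.
move=> /andP[u0 uw]; apply/seteqP; split => x /=.
  move=> H; have [xi|xi] := leP (tnth x i) (a i + u).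
    left => j; rewrite /upd; case: eqP => [->|_]; last exact: H.
    by have := H i; lra.
  right => j; rewrite /upd; case: eqP => [->|_]; last exact: H.
  by have := H i; lra.
move=> [] H j; have := H j; rewrite /upd; case: eqP => [->|_] //; lra.
Qed.

Lemma box_splitI a w i u :
  box a (upd w i u) `&` box (upd a i (a i + u)) (upd w i (w i - u)) `<=` face i (a i + u).
Proof.
move=> x [H1 H2]; rewrite /face /=.
have := H1 i; have := H2 i; rewrite /upd eqxx; lra.
Qed.

Local Open Scope ereal_scope.

Lemma int_split (g : n.-tuple R -> \bar R) (B B1 B2 : set (n.-tuple R)) :
  measurable_fun [set: n.-tuple R] g -> measurable B1 -> measurable B2 ->
  B = B1 `|` B2 -> lebm R n (B1 `&` B2) = 0 ->
  \int[lebm R n]_(x in B) g x =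
  \int[lebm R n]_(x in B1) g x + \int[lebm R n]_(x in B2) g x.
Proof.
move=> mg mB1 mB2 -> N0.
have -> : B1 `|` B2 = B1 `|` (B2 `\` B1) by rewrite setDE setUIr setUv setIT.
rewrite integral_setU //; last 3 first.
- exact: measurableD.
- exact: measurable_funTS.
- by apply/disj_setPS => x [? []].
congr (_ + _).
have -> : \int[lebm R n]_(x in B2) g x =
    \int[lebm R n]_(x in (B2 `\` B1) `|` (B1 `&` B2)) g x.
  congr (integral _ _ _); apply/seteqP; split => x.
    by move=> H; have [?|?] := pselect (B1 x); [right|left].
  by move=> [[]|[]].
rewrite integral_setU //; last 4 first.
- exact: measurableD.
- exact: measurableI.
- exact: measurable_funTS.
- by apply/disj_setPS => x [[? ?] []].
rewrite [X in _ = _ + X]null_set_integral ?adde0 //.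
- exact: measurableI.
- exact: measurable_funTS.
Qed.



Lemma sum_upd (m : 'I_n -> nat) (i : 'I_n) (k : nat) :
  ((\sum_j (if j == i then k else m j)) + m i = \sum_j m j + k)%N.
Proof.
rewrite (bigD1 i) //= [in RHS](bigD1 i) //= eqxx.
have -> : (\sum_(j < n | j != i) (if j == i then k else m j) = \sum_(j < n | j != i) m j)%N.
  by apply: eq_bigr => j /negbTE ->.
set S := (\sum_(j < n | j != i) m j)%N; lia.
Qed.

Lemma box_ind (g : n.-tuple R -> \bar R) (t : R) :
  measurable_fun [set: n.-tuple R] g -> (0 < t)%R ->
  (forall a, 0 <= \int[lebm R n]_(x in box a (fun=> t)) g x) ->
  forall N (m : 'I_n -> nat), (\sum_i m i <= N)%N -> (forall i, 0 < m i)%N ->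
  forall a, 0 <= \int[lebm R n]_(x in box a (fun i => ((m i)%:R * t)%R)) g x.
Proof.
move=> mg t0 Hc; elim=> [|N IH] m Hs Hp a.
all: have [H1|] := pselect (forall i, m i = 1%N).
- rewrite (_ : (fun i => _) = fun=> t); first exact: Hc.
  by apply/funext => i; rewrite H1 mul1r.
- move=> /existsNP[i mi]; have := Hp i; have := sum_upd m i 0.
  move: Hs; rewrite leqn0 => /eqP ->; lia.
- rewrite (_ : (fun i => _) = fun=> t); first exact: Hc.
  by apply/funext => i; rewrite H1 mul1r.
move=> /existsNP[i mi].
have mi2 : (1 < m i)%N by have := Hp i; lia.
set w := (fun i => ((m i)%:R * t)%R).
have tw : (0 <= t <= w i)%R.
  rewrite (ltW t0) /= /w; rewrite -[leLHS]mul1r ler_wpM2r ?(ltW t0) // ler1n; lia.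
rewrite (@int_split g _ _ _ mg (measurable_box _ _) (measurable_box _ _) (box_splitU a tw)); last first.
  apply: (@subset_measure0 _ _ _ (lebm R n) _ (face i (a i + t)%R)).
  - by apply: measurableI; exact: measurable_box.
  - exact: measurable_face.
  - exact: box_splitI.
  - exact: face0.
apply: adde_ge0.
  rewrite (_ : upd w i t = fun j => ((if j == i then 1%N else m j)%:R * t)%R).
    apply: IH.
    - move: Hs; have := sum_upd m i 1.
      set S1 := (\sum_j (if j == i then _ else _))%N; set S := (\sum_j m j)%N; lia.
    - by move=> j; case: eqP => // _; exact: Hp.
  by apply/funext => j; rewrite /upd /w; case: eqP => //; rewrite mul1r.
rewrite (_ : upd w i (w i - t)%R = fun j => ((if j == i then (m i).-1 else m j)%:R * t)%R).
  apply: IH.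
  - move: Hs; have := sum_upd m i (m i).-1.
    set S1 := (\sum_j (if j == i then _ else _))%N; set S := (\sum_j m j)%N; lia.
  - by move=> j; case: eqP => [_|_]; [lia|exact: Hp].
apply/funext => j; rewrite /upd /w; case: eqP => // _.
rewrite -{1}(prednK (ltnW mi2)) -addn1 natrD mulrDl mul1r; lra.
Qed.

End Boxes.

Section Analytic.
Context (R : realType) (n : nat).
Implicit Types (f : n.-tuple R -> R) (a : n.-tuple R) (s : R).

Lemma is_cube_cube a s : 0 < s -> is_cube (cube a s).
Proof. by move=> s0; exists a, s. Qed.

Lemma integrable_cube f a s : L1loc f -> 0 < s ->
  (lebm R n).-integrable (cube a s) (EFin \o f).
Proof.
move=> [mf fint] s0; apply/integrableP; split.
  by apply/measurable_EFinP; exact: measurable_funTS.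
have := fint (cube a s) (is_cube_cube a s0).
by rewrite lebnE.
Qed.

Lemma integrable_cst_cube a s (k : R) : 0 <= s ->
  (lebm R n).-integrable (cube a s) (EFin \o cst k).
Proof.
move=> s0; apply/integrableP; split; first exact/measurable_EFinP.
rewrite (eq_integral (cst `|k|%:E)) //.
rewrite integral_cst ?vol_cube //; last exact: measurable_cube.
by rewrite -[X in (_ * X)%E]/(lebm R n (cube a s)) (vol_cube a s0) -EFinM ltry.
Qed.

Lemma vol_cubeE a s : 0 <= s -> vol (cube a s) = s ^+ n.
Proof. by move=> s0; rewrite /vol lebnE vol_cube. Qed.

Lemma intQE f a s : L1loc f -> 0 < s ->
  (\int[lebm R n]_(x in cube a s) (f x)%:E)%E = (intQ (cube a s) f)%:E.
Proof.
move=> Lf s0; rewrite /intQ lebnE fineK //.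
exact: (integrable_fin_num (measurable_cube a s) (integrable_cube a Lf s0)).
Qed.

Lemma int_addc f a s (k : R) : L1loc f -> 0 < s ->
  (\int[lebm R n]_(x in cube a s) (f x + k)%:E)%E = (intQ (cube a s) f + k * s ^+ n)%:E.
Proof.
move=> Lf s0.
have := @integralD_EFin _ _ R (lebm R n) (cube a s) (measurable_cube a s) f (cst k)
  (integrable_cube a Lf s0) (integrable_cst_cube a k (ltW s0)).
rewrite /= => ->.
rewrite intQE // integral_cst; last exact: measurable_cube.
rewrite -[X in (_ * X)%E]/(lebm R n (cube a s)) (vol_cube a (ltW s0)).
by rewrite -EFinM -EFinD.
Qed.

Lemma intQ_addc f a s (k : R) : L1loc f -> 0 < s ->
  intQ (cube a s) (fun x => f x + k) = intQ (cube a s) f + k * s ^+ n.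
Proof.
move=> Lf s0; rewrite [LHS]/intQ lebnE.
by rewrite (int_addc a k Lf s0).
Qed.

Lemma osc_cube f a s : L1loc f -> 0 < s ->
  osc f (cube a s) = `| intQ (cube a s) f / s ^+ n - `|intQ (cube a s) f / s ^+ n| |.
Proof.
move=> Lf s0.
have V0 : s ^+ n != 0 by rewrite expf_neq0 // gt_eqF.
rewrite /osc /fQ !vol_cubeE ?(ltW s0) //.
rewrite (intQ_addc a (- `|intQ (cube a s) f / s ^+ n|) Lf s0).
by rewrite mulrDl !mulNr (mulfK V0).
Qed.

Lemma osc_cube0 f a s : L1loc f -> 0 < s -> 0 <= intQ (cube a s) f ->
  osc f (cube a s) = 0.
Proof.
move=> Lf s0 I0; rewrite osc_cube // [`|_ / _|]ger0_norm ?subrr ?normr0 //.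
by rewrite divr_ge0 // exprn_ge0 // ltW.
Qed.

Lemma osc_cube_lt f a s e : L1loc f -> 0 < s -> osc f (cube a s) < e ->
  0 <= intQ (cube a s) f + e / 2 * s ^+ n.
Proof.
move=> Lf s0 H; have e0 : 0 < e := le_lt_trans (normr_ge0 _) H.
move: H; rewrite osc_cube //.
set V := s ^+ n; have V0 : 0 < V by rewrite /V exprn_gt0.
set I := intQ _ f.
have IE : I = (I / V) * V by rewrite mulfVK // gt_eqF.
move=> H; rewrite IE; move: H.
set q := I / V.
have [q0|q0] := leP 0 q.
  by move=> _; apply: addr_ge0; apply: mulr_ge0; lra.
rewrite (ltr0_norm q0) opprK ltr0_norm; last lra.
move=> H; nra.
Qed.

End Analytic.

Lemma le0_eps (R : realType) (I V : R) : 0 < V ->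
  (forall c, 0 < c -> - (c * V) <= I) -> 0 <= I.
Proof.
move=> V0 H; rewrite leNgt; apply/negP => I0.
have c0 : 0 < - I / (2 * V) by apply: divr_gt0; lra.
have := H _ c0.
have -> : - I / (2 * V) * V = - I / 2 by field; lra.
lra.
Qed.

Section Main.
Context (R : realType) (n : nat).
Implicit Types (f : n.-tuple R -> R) (a : n.-tuple R) (s : R).

Lemma box_cube (a' : 'I_n -> R) t :
  box a' (fun=> t) = cube [tuple a' i | i < n] t.
Proof.
by apply/seteqP; split => x /= H i; have := H i; rewrite tnth_mktuple.
Qed.

Lemma vmo_cube_ge0 f : (0 < n)%N -> VMOw f ->
  forall a s, 0 < s -> 0 <= intQ (cube a s) f.
Proof.
move=> n0 [Lf Hv] a s s0.
have V0 : 0 < s ^+ n by rewrite exprn_gt0.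
apply: (le0_eps V0) => c c0.
have [d [d0 Hd]] := Hv (2 * c) (ltac:(lra)).
pose M := (Num.truncn (s / d + s)).+1.
have HM : s / d + s < M%:R := Num.Theory.truncnS_gt _.
have M0 : 0 < M%:R :> R by rewrite ltr0n.
pose t := s / M%:R.
have t0 : 0 < t by rewrite /t divr_gt0.
have sd : 0 < s / d by rewrite divr_gt0.
have td : t < d.
  rewrite /t ltr_pdivrMr //.
  have : s / d < M%:R by lra.
  by rewrite ltr_pdivrMr // mulrC.
have t1 : t < 1 by rewrite /t ltr_pdivrMr // mul1r; lra.
have tn : t ^+ n <= t.
  case: n n0 {V0 Hv Lf a} => // k _.
  by rewrite exprS ler_piMr ?(ltW t0) // exprn_ile1 // ?ltW.
pose g := fun x => (f x + c)%:E.
have mg : measurable_fun [set: n.-tuple R] g.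
  apply/measurable_EFinP; apply: measurable_funD => //; exact: Lf.1.
have Hc : forall a' : 'I_n -> R, (0 <= \int[lebm R n]_(x in box a' (fun=> t)) g x)%E.
  move=> a'; rewrite box_cube /g int_addc // lee_fin.
  have := @osc_cube_lt R n f [tuple a' i | i < n] t (2 * c) Lf t0.
  rewrite (_ : 2 * c / 2 = c); last by field.
  apply; apply: Hd; first exact: is_cube_cube.
  by rewrite vol_cubeE ?(ltW t0) //; lra.
have := box_ind mg t0 Hc (leqnn (\sum_(i < n) M)) (fun _ => ltn0Sn _) (tnth a).
rewrite (_ : box _ _ = cube a s); last first.
  rewrite /box /cube /t; apply/seteqP; split => x /= H i; have := H i;
    by rewrite mulrC divfK ?gt_eqF.
rewrite /g int_addc // lee_fin; lra.
Qed.

End Main.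

Section Main2.
Context (R : realType) (n : nat).
Implicit Types (f : n.-tuple R -> R) (a : n.-tuple R) (s : R).

Lemma cube_self (x : n.-tuple R) : cube x 1 x.
Proof. by move=> i; rewrite lexx /= lerDl ler01. Qed.

Lemma Mw_ge0 f x : (0 <= Mw f x)%E.
Proof.
apply: (@le_trans _ _ (osc f (cube x 1))%:E); first by rewrite lee_fin normr_ge0.
apply: ereal_sup_ubound; exists (cube x 1) => //; split; last exact: cube_self.
exact: is_cube_cube.
Qed.

Lemma Linf_ge0 (g : n.-tuple R -> \bar R) : (0 <= Linf_norm g)%E.
Proof.
apply: le_ereal_inf_tmp => z /=; rewrite lebnE => -[N [mN N0 HN]].
rewrite leNgt; apply/negP => z0.
have : lebm R n (cube [tuple 0 | _ < n] 1) = 0%E.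
  apply: (subset_measure0 _ mN) => //; first exact: measurable_cube.
  move=> y _; apply: HN => /= H.
  by move: (le_lt_trans (le_trans (abse_ge0 _) H) z0); rewrite ltxx.
rewrite vol_cube ?ler01 // expr1n => /eqP; by rewrite eqe oner_eq0.
Qed.

Lemma Linf_cst0 : (Linf_norm (fun _ : n.-tuple R => 0%E) <= 0)%E.
Proof.
apply: ereal_inf_lbound => /=; rewrite lebnE.
by apply: aeW => x /=; rewrite normr0.
Qed.


Lemma intQ_sub f g a s : L1loc f -> L1loc g -> 0 < s ->
  intQ (cube a s) (fun x => f x - g x) = intQ (cube a s) f - intQ (cube a s) g.
Proof.
move=> Lf Lg s0; rewrite [LHS]/intQ lebnE.
under eq_integral do rewrite EFinB.
rewrite integralB_EFin; first last.
- exact: integrable_cube.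
- exact: integrable_cube.
- exact: measurable_cube.
by rewrite !intQE // -EFinB.
Qed.

Lemma Mw_vmo f : (0 < n)%N -> VMOw f -> Mw f = fun=> 0%E.
Proof.
move=> n0 Hf; apply/funext => x; rewrite /Mw.
rewrite [X in ereal_sup X](_ : _ = [set 0%E]) ?ereal_sup1 //.
apply/seteqP; split => y /=.
  move=> [Q [[a [s [s0 ->]]] _] <-].
  by rewrite osc_cube0 //; [exact: Hf.1 | exact: vmo_cube_ge0].
move=> ->; exists (cube x 1); last by rewrite osc_cube0 //; [exact: Hf.1 | exact: vmo_cube_ge0].
by split; [exact: is_cube_cube | exact: cube_self].
Qed.

Lemma cube0 (a : 0.-tuple R) s : cube a s = setT.
Proof. by apply/seteqP; split => x // _ []. Qed.

End Main2.

Lemma part1 (R : realType) (n : nat) (f : n.-tuple R -> R) : VMOw f -> BMOw f.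
Proof.
move=> Hf; split; first exact: Hf.1.
case: n f Hf => [|n] f Hf.
  apply: (@le_lt_trans _ _ (`|osc f setT|)%:E); last exact: ltry.
  apply: ereal_inf_lbound; rewrite lebnE; apply: aeW => x.
  rewrite gee0_abs; last exact: Mw_ge0.
  apply: ge_ereal_sup => _ [Q [[a [s [_ ->]]] _] <-].
  by rewrite cube0 lee_fin ler_norm.
rewrite Mw_vmo //; exact: le_lt_trans (Linf_cst0 _ _) (ltry 0).
Qed.


Lemma part2 (R : realType) (n : nat) (fk : nat -> n.-tuple R -> R) (f : n.-tuple R -> R) :
  (forall k, VMOw (fk k)) -> BMOw f ->
  (forall eps : R, 0 < eps -> exists N : nat, forall k : nat, (N <= k)%N ->
        (BMOw_norm (fun x => (f x - fk k x)%R) <= eps%:E)%E) ->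
  VMOw f.
Proof.
move=> Hk Hb Hc; split; first exact: Hb.1.
move=> eps e0.
case: n fk f Hk Hb Hc => [|n] fk f Hk Hb Hc.
  exists (1/2); split; first lra.
  move=> Q [a [s [s0 ->]]]; rewrite vol_cubeE ?(ltW s0) // expr0; lra.
exists 1; split; first lra.
move=> Q [a [s [s0 ->]]] _.
rewrite osc_cube0 //; first exact: Hb.1.
have V0 : 0 < s ^+ n.+1 by rewrite exprn_gt0.
apply: (le0_eps V0) => c c0.
have y0 : 0 < c / 2 by lra.
have [N HN] := Hc _ y0.
have HB := HN N (leqnn N).
set h := fun x => f x - fk N x.
have Lf := Hb.1; have Lfk := (Hk N).1.
have Hm : (Linf_norm (mw h) <= (c / 2)%:E)%E.
  exact: le_trans (leeDl _ (Linf_ge0 _)) HB.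
have : (Linf_norm (mw h) < c%:E)%E.
  by apply: le_lt_trans Hm _; rewrite lte_fin; lra.
move=> /ereal_inf_lt [z Hz zc].
move: Hz; rewrite (lebnE R n.+1) => -[Nn [mNn Nn0 HNn]].
have [x [Qx nN]] : exists x, cube a s x /\ ~ Nn x.
  apply: contrapT => H.
  have : lebm R n.+1 (cube a s) = 0%E.
    apply: (subset_measure0 _ mNn) => //; first exact: measurable_cube.
      move=> x Qx; apply: contrapT => nx; apply: H; by exists x.
  move=> H0; have := vol_cube a (ltW s0); rewrite H0 => /eqP; rewrite eqe eq_sym; apply/negP; exact: lt0r_neq0.
have hx : (`|mw h x| <= z)%E.
  by apply: contrapT => H; apply: nN; apply: HNn.
have fq : ((fQ h (cube a s))%:E <= mw h x)%E.
  apply: ereal_sup_ubound; exists (cube a s) => //; split => //.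
  exact: is_cube_cube.
have : fQ h (cube a s) < c.
  rewrite -lte_fin; apply: le_lt_trans fq _.
  exact: le_lt_trans (le_trans (lee_abs _) hx) zc.
rewrite /fQ vol_cubeE ?(ltW s0) // /h intQ_sub //.
have J0 := vmo_cube_ge0 (ltn0Sn n) (Hk N) a s0.
set I := intQ _ f; set J := intQ _ (fk N); set V := s ^+ n.+1.
rewrite ltr_norml => /andP[H1 _].
have E : I - J = (I - J) / V * V by rewrite mulfVK // gt_eqF.
have V0' : 0 < V := V0.
move: H1 E; set q := (I - J) / V => H1 E.
have : 0 < (q + c) * V by apply: mulr_gt0; lra.
have J0' : 0 <= J := J0.
nra.
Qed.

Unset Implicit Arguments.
Theorem theorem7 (R : realType) (n : nat) :
  (* VMO^w is contained in BMO^w *)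
  (forall f : n.-tuple R -> R, VMOw f -> BMOw f) /\
  (* and it is closed in BMO^w for the BMO^w-norm *)
  (forall (fk : nat -> n.-tuple R -> R) (f : n.-tuple R -> R),
     (forall k, VMOw (fk k)) -> BMOw f ->
     (forall eps : R, 0 < eps -> exists N : nat, forall k : nat, (N <= k)%N ->
        (BMOw_norm (fun x => (f x - fk k x)%R) <= eps%:E)%E) ->
     VMOw f).
Proof.
split; first exact: part1.
exact: part2.
Qed.
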